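(* For any $\alpha\ge1$ and $\beta\ge1$, there exist a finite set $\mathcal{N}$ of $n$ agents, a finite set $\mathcal{M}$ of feasible centers, a positive integer $k$, a pseudometric $d^m$ on $\mathcal{N}$ and a function $d^c:\mathcal{N}\times\mathcal{M}\to\mathbb{R}_{\ge0}$ (a centroid metric, possibly unrelated to $d^m$) such that no clustering is both $\alpha$-FJR with respect to the centroid loss $\ell_i(C,x)=d^c(i,x)$ and $\beta$-FJR with respect to the non-centroid loss $\ell_i(C,x)=\max_{j\in C}d^m(i,j)$.
   Context: Given losses $\ell_i(C,x)\ge0$ for $i\in C\subseteq\mathcal{N}$, $x\in\mathcal{M}$: a clustering is $\mathcal{X}=\{(C_1,x_1),\dots,(C_k,x_k)\}$ with $C_t$ pairwise disjoint subsets of $\mathcal{N}$ (some possibly empty), union $\mathcal{N}$, $x_t\in\mathcal{M}$; $\ell_i(\mathcal{X})=\ell_i(C_t,x_t)$ where $i\in C_t$. For $\alpha\ge1$, $\mathcal{X}$ is $\alpha$-FJR (with respect to the losses $\ell_i$) if there is no $S\subseteq\mathcal{N}$ with $|S|\ge n/k$ and $y\in\mathcal{M}$ with $\alpha\,\ell_i(S,y)<\min_{j\in S}\ell_j(\mathcal{X})$ for all $i\in S$. *)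

(* Defs.v *)
From mathcomp Require Import all_boot all_order all_algebra.
From mathcomp Require Import reals.
Set Implicit Arguments. Unset Strict Implicit. Unset Printing Implicit Defensive.
Import Order.TTheory GRing.Theory Num.Theory.
Local Open Scope ring_scope.

(* A clustering with k (possibly empty) clusters is given by an assignment
   sigma : N -> 'I_k of agents to clusters and centers x : 'I_k -> M.
   Cluster t is C_t = [set i | sigma i == t]. *)
Definition cluster (N : finType) (k : nat) (sigma : N -> 'I_k) (t : 'I_k)
  : {set N} := [set i | sigma i == t].

Definition clust_loss (R : realType) (N M : finType) (k : nat)
  (l : N -> {set N} -> M -> R) (sigma : N -> 'I_k) (x : 'I_k -> M) (i : N) : R :=
  l i (cluster sigma (sigma i)) (x (sigma i)).

(* alpha-FJR: no S with |S| >= n/k and y with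
   alpha * l_i(S,y) < min_{j in S} l_j(X) for all i in S.
   "< min_{j in S}" is written out as "< l_j(X) for every j in S". *)
Definition FJR (R : realType) (N M : finType) (k : nat) (alpha : R)
  (l : N -> {set N} -> M -> R) (sigma : N -> 'I_k) (x : 'I_k -> M) : Prop :=
  ~ exists (S : {set N}) (y : M),
      ((#|N|%:R / k%:R : R) <= #|S|%:R) /\
      (forall i, i \in S -> forall j, j \in S ->
          alpha * l i S y < clust_loss l sigma x j).

Definition pseudometric (R : realType) (N : finType) (d : N -> N -> R) : Prop :=
  (forall i, d i i = 0) /\ (forall i j, 0 <= d i j) /\
  (forall i j, d i j = d j i) /\ (forall i j h, d i h <= d i j + d j h).

Definition centroid_loss (R : realType) (N M : finType) (dc : N -> M -> R)
  : N -> {set N} -> M -> R := fun i _ x => dc i x.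

(* non-centroid loss l_i(C,x) = max_{j in C} dm(i,j) (dm >= 0, so 0 as base) *)
Definition noncentroid_loss (R : realType) (N M : finType) (dm : N -> N -> R)
  : N -> {set N} -> M -> R := fun i C _ => \big[Num.max/0]_(j in C) dm i j.

(* Main.v *)
Require Import Defs.
From mathcomp Require Import all_boot all_order all_algebra.
From mathcomp Require Import reals.
From mathcomp Require Import lra.
Import Order.TTheory GRing.Theory Num.Theory.
Local Open Scope ring_scope.

Lemma ord2 (a b c : 'I_2) : a != b -> (c == a) || (c == b).
Proof. by case: a b c => [[|[|?]] ?] [[|[|?]] ?] [[|[|?]] ?]. Qed.

Lemma bigmax_ge (R : realType) (T : finType) (S : {set T}) (F : T -> R) h :
  h \in S -> F h <= \big[Num.max/0]_(j in S) F j.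
Proof. by move=> hS; rewrite (bigD1 h) //= le_max lexx. Qed.

Theorem mainTheorem13 (R : realType) (alpha beta : R) :
  1 <= alpha -> 1 <= beta ->
  exists (N M : finType) (k : nat) (dm : N -> N -> R) (dc : N -> M -> R),
    [/\ [/\ (0 < #|N|)%N, (0 < #|M|)%N & (0 < k)%N],
        pseudometric dm, (forall i x, 0 <= dc i x) &
        forall (sigma : N -> 'I_k) (x : 'I_k -> M),
          ~ (FJR alpha (centroid_loss dc) sigma x /\
             FJR beta (@noncentroid_loss R N M dm) sigma x)].
Proof.
move=> ha hb.
pose dm (i j : bool * bool) : R := if i.1 == j.1 then 0 else 1.
pose dc (i m : bool * bool) : R :=
  if (if i.1 then i.2 == m.2 else i.2 == m.1) then 0 else 1.
have cardN : #|{: bool * bool}| = 4%N by rewrite card_prod card_bool.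
have card2' : forall a b : bool * bool, a != b -> #|[set a; b]| = 2%N.
  by move=> a b ab; rewrite cards2 ab.
have thr : (#|{: bool * bool}|%:R / 2%:R : R) <= 2%:R.
  by rewrite cardN; lra.
exists (bool * bool)%type, (bool * bool)%type, 2%N, dm, dc.
split.
- by rewrite cardN.
- split; first by move=> i; rewrite /dm eqxx.
  split; first by move=> i j; rewrite /dm; case: ifP.
  split; first by move=> i j; rewrite /dm eq_sym.
  move=> [[] []] [[] []] [[] []]; rewrite /dm /=; lra.
- by move=> i m; rewrite /dc; case: ifP.
move=> sigma x [Fc Fn].
pose sat (i : bool * bool) :=
  if i.1 then i.2 == (x (sigma i)).2 else i.2 == (x (sigma i)).1.
have cross : forall s t, sat (false, s) || sat (true, t).
  move=> s t; apply/negPn/negP => /norP [h1 h2]; apply: Fc.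
  exists [set (false, s); (true, t)], (s, t); split.
    by rewrite card2'.
  move=> i; rewrite in_set2 => /orP [] /eqP -> j; rewrite in_set2 => /orP [] /eqP ->;
  rewrite /clust_loss /centroid_loss /dc /= eqxx mulr0;
  by rewrite /sat /= in h1 h2; rewrite ?(negbTE h1) ?(negbTE h2) ltr01.
have [g /andP [sf st]] : exists g, sat (g, false) && sat (g, true).
  case Ef: (sat (false, false)); case Et: (sat (false, true)).
  - by exists false; rewrite Ef Et.
  - by exists true; move: (cross true false) (cross true true); rewrite Et /= => -> ->.
  - by exists true; move: (cross false false) (cross false true); rewrite Ef /= => -> ->.
  - by exists true; move: (cross false false) (cross false true); rewrite Ef /= => -> ->.
have dif : sigma (g, false) != sigma (g, true).
  apply/negP => /eqP E; move: sf st; rewrite /sat /= E.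
  by case: g E => /= _; case: (x _) => [[] []].
apply: Fn.
exists [set (~~ g, false); (~~ g, true)], (false, false); split.
  by rewrite card2' //; case: g {sf st dif}.
move=> i iS j jS.
have -> : noncentroid_loss dm i [set (~~ g, false); (~~ g, true)] (false, false) = 0.
  rewrite /noncentroid_loss.
  elim/big_rec: _ => // h v; rewrite in_set2 => /orP [] /eqP -> ->;
  move: iS; rewrite in_set2 => /orP [] /eqP -> ; by rewrite /dm /= eqxx maxxx.
rewrite mulr0 /clust_loss /noncentroid_loss.
have j1 : j.1 = ~~ g by move: jS; rewrite in_set2 => /orP [] /eqP ->.
have [h [hc hg]] : exists h : bool * bool, h \in cluster sigma (sigma j) /\ h.1 = g.
  case/orP: (@ord2 _ _ (sigma j) dif) => /eqP E.
  - by exists (g, false); rewrite /cluster inE E.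
  - by exists (g, true); rewrite /cluster inE E.
apply: (lt_le_trans _ (@bigmax_ge _ _ _ (dm j) _ hc)).
by rewrite /dm j1 hg; case: (g) => /=; rewrite ltr01.
Qed.
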